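(* Let $M(C,\bar\xi,\pi)$ be a Myller configuration with Darboux frame $(\bar\xi,\bar\mu,\bar v)$ and invariants $G,K,T$, with $(G(s),K(s))\neq(0,0)$ for all $s$. Then: (i) if $K\equiv 0$, $C$ is a $\bar\xi$-helix iff $\sigma_\xi=\pm T/G$ is constant; (ii) if $G\equiv 0$, $C$ is a $\bar\xi$-helix iff $\sigma_\xi=\pm T/K$ is constant; (iii) if $T\equiv 0$, $C$ is a $\bar\xi$-helix iff $\sigma_\xi=\mp\dfrac{G'K-GK'}{(G^2+K^2)^{3/2}}$ is constant.
   Context: Let $C$ be a smooth curve in Euclidean 3-space $E^3$ parametrized by arclength $s$; primes denote $d/ds$. A Myller configuration $M(C,\bar\xi,\pi)$ consists of a smooth unit vector field $\bar\xi(s)$ along $C$ and a smooth field of oriented planes $\pi(s)$ with $\bar\xi(s)\in\pi(s)$. Let $\bar v(s)$ be the unit normal of $\pi(s)$ and $\bar\mu=\bar v\times\bar\xi$. The Darboux frame satisfies $\bar\xi'=G\bar\mu+K\bar v$, $\bar\mu'=-G\bar\xi+T\bar v$, $\bar v'=-K\bar\xi-T\bar\mu$. $C$ is a $\bar\xi$-helix in $M$ if there are a constant unit vector $\bar d_\xi$ and a constant $\theta$ with $\langle\bar\xi,\bar d_\xi\rangle=\cos\theta$ along $C$. *)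

(* Defs.v *)
From Stdlib Require Import Reals.
From Coquelicot Require Import Coquelicot.
Open Scope R_scope.

Record vec := mkV { vx : R; vy : R; vz : R }.

Definition dot (u w : vec) : R := vx u * vx w + vy u * vy w + vz u * vz w.

Definition cross (u w : vec) : vec :=
  mkV (vy u * vz w - vz u * vy w)
      (vz u * vx w - vx u * vz w)
      (vx u * vy w - vy u * vx w).

Definition vadd (u w : vec) : vec := mkV (vx u + vx w) (vy u + vy w) (vz u + vz w).
Definition vscal (c : R) (u : vec) : vec := mkV (c * vx u) (c * vy u) (c * vz u).

Definition vderive (f : R -> vec) (s : R) (w : vec) : Prop :=
  is_derive (fun t => vx (f t)) s (vx w) /\
  is_derive (fun t => vy (f t)) s (vy w) /\
  is_derive (fun t => vz (f t)) s (vz w).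

Definition smooth_on (I : R -> Prop) (g : R -> R) : Prop :=
  forall (n : nat) (s : R), I s -> ex_derive_n g n s.

Definition vsmooth_on (I : R -> Prop) (f : R -> vec) : Prop :=
  smooth_on I (fun t => vx (f t)) /\ smooth_on I (fun t => vy (f t)) /\
  smooth_on I (fun t => vz (f t)).

Definition open_itv (a b : Rbar) (s : R) : Prop := Rbar_lt a s /\ Rbar_lt s b.

(* Myller configuration M(C, xi, pi) along the arclength-parametrized curve r,
   given by its Darboux frame (xi, mu, nu) (nu = unit normal of pi) and
   invariants G, K, T. *)
Definition myller_config (I : R -> Prop) (r xi mu nu : R -> vec) (G K T : R -> R) : Prop :=
  vsmooth_on I r /\ vsmooth_on I xi /\ vsmooth_on I nu /\
  smooth_on I G /\ smooth_on I K /\ smooth_on I T /\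
  (forall s, I s ->
     (exists w, vderive r s w /\ dot w w = 1) /\
     dot (xi s) (xi s) = 1 /\ dot (nu s) (nu s) = 1 /\ dot (xi s) (nu s) = 0 /\
     mu s = cross (nu s) (xi s) /\
     vderive xi s (vadd (vscal (G s) (mu s)) (vscal (K s) (nu s))) /\
     vderive mu s (vadd (vscal (- G s) (xi s)) (vscal (T s) (nu s))) /\
     vderive nu s (vadd (vscal (- K s) (xi s)) (vscal (- T s) (mu s)))).

Definition xi_helix (I : R -> Prop) (xi : R -> vec) : Prop :=
  exists (d : vec) (theta : R), dot d d = 1 /\
    forall s, I s -> dot (xi s) d = cos theta.

Definition const_on (I : R -> Prop) (g : R -> R) : Prop :=
  exists c : R, forall s, I s -> g s = c.

(* Main.v *)
Require Import Defs.
From Stdlib Require Import Reals Lra.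
From Coquelicot Require Import Coquelicot.
Open Scope R_scope.

Lemma Dplus (f g : R -> R) s lf lg : is_derive f s lf -> is_derive g s lg ->
  is_derive (fun t => f t + g t) s (lf + lg).
Proof. intros; exact (is_derive_plus f g s lf lg H H0). Qed.
Lemma Dminus (f g : R -> R) s lf lg : is_derive f s lf -> is_derive g s lg ->
  is_derive (fun t => f t - g t) s (lf - lg).
Proof. intros; exact (is_derive_minus f g s lf lg H H0). Qed.
Lemma Dmult (f g : R -> R) s lf lg : is_derive f s lf -> is_derive g s lg ->
  is_derive (fun t => f t * g t) s (lf * g s + f s * lg).
Proof. intros. apply (is_derive_mult f g s lf lg H H0). intros; apply Rmult_comm. Qed.
Lemma Dconst (c : R) s : is_derive (fun _ => c) s 0.
Proof. apply (is_derive_const c s). Qed.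
Lemma Dopp (f : R -> R) s lf : is_derive f s lf -> is_derive (fun t => - f t) s (- lf).
Proof. intros; exact (is_derive_opp f s lf H). Qed.
Lemma Dmultc (f : R -> R) c s lf : is_derive f s lf -> is_derive (fun t => c * f t) s (c * lf).
Proof. intros. replace (c * lf) with (0 * f s + c * lf) by ring. apply Dmult; auto using Dconst. Qed.
Lemma Dmultc' (f : R -> R) c s lf : is_derive f s lf -> is_derive (fun t => f t * c) s (lf * c).
Proof. intros. replace (lf * c) with (lf * c + f s * 0) by ring. apply Dmult; auto using Dconst. Qed.

Lemma dot_derive (f : R -> vec) s w d :
  vderive f s w -> is_derive (fun t => dot (f t) d) s (dot w d).
Proof.
  intros [Hx [Hy Hz]]. unfold dot.
  repeat apply Dplus; apply Dmultc'; assumption.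
Qed.

Lemma vderive_lin (f g : R -> vec) s w u c :
  vderive f s w -> vderive g s u ->
  vderive (fun t => vadd (vscal c (f t)) (g t)) s (vadd (vscal c w) u).
Proof.
  intros [Hx [Hy Hz]] [Gx [Gy Gz]]; split; [|split]; cbn [vx vy vz vadd vscal];
  apply Dplus; try assumption; apply Dmultc; assumption.
Qed.

Lemma vderive_scal (h : R -> R) (f : R -> vec) s h' w :
  is_derive h s h' -> vderive f s w ->
  vderive (fun t => vscal (h t) (f t)) s (vadd (vscal h' (f s)) (vscal (h s) w)).
Proof.
  intros Hh [Hx [Hy Hz]]; split; [|split]; cbn [vx vy vz vadd vscal]; apply Dmult; assumption.
Qed.

Lemma vderive_add (f g : R -> vec) s w u :
  vderive f s w -> vderive g s u ->
  vderive (fun t => vadd (f t) (g t)) s (vadd w u).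
Proof.
  intros [Hx [Hy Hz]] [Gx [Gy Gz]]; split; [|split]; cbn [vx vy vz vadd vscal];
  apply Dplus; assumption.
Qed.

Lemma itv_locally a b s : open_itv a b s -> locally s (open_itv a b).
Proof.
  intros Hs. apply (open_and _ _ (open_Rbar_gt a) (open_Rbar_lt b)). exact Hs.
Qed.

Lemma deriv_of_const a b (f : R -> R) c s l :
  (forall t, open_itv a b t -> f t = c) -> open_itv a b s -> is_derive f s l -> l = 0.
Proof.
  intros Hc Hs Hd.
  assert (H0 : is_derive (fun _ => c) s l).
  { eapply is_derive_ext_loc; [|exact Hd].
    eapply filter_imp; [|exact (itv_locally a b s Hs)]. intros t Ht. apply Hc, Ht. }
  rewrite <- (is_derive_unique _ _ _ H0). apply Derive_const.
Qed.

Lemma itv_between a b x y z : open_itv a b x -> open_itv a b y ->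
  Rmin x y <= z <= Rmax x y -> open_itv a b z.
Proof.
  intros [Hx1 Hx2] [Hy1 Hy2] [H1 H2]. split.
  - destruct (Rle_dec x y).
    + rewrite Rmin_left in H1 by lra. eapply Rbar_lt_le_trans; [exact Hx1|]. simpl; lra.
    + rewrite Rmin_right in H1 by lra. eapply Rbar_lt_le_trans; [exact Hy1|]. simpl; lra.
  - destruct (Rle_dec x y).
    + rewrite Rmax_right in H2 by lra. eapply Rbar_le_lt_trans; [|exact Hy2]. simpl; lra.
    + rewrite Rmax_left in H2 by lra. eapply Rbar_le_lt_trans; [|exact Hx2]. simpl; lra.
Qed.

Lemma const_of_deriv0 a b (f : R -> R) s1 s2 :
  (forall t, open_itv a b t -> is_derive f t 0) -> open_itv a b s1 -> open_itv a b s2 ->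
  f s2 = f s1.
Proof.
  intros Hd H1 H2.
  destruct (MVT_gen f s1 s2 (fun _ => 0)) as [c [_ Hc]].
  - intros x Hx. apply Hd. eapply itv_between; [exact H1|exact H2|lra].
  - intros x Hx. apply continuity_pt_filterlim.
    apply (ex_derive_continuous (K:=R_AbsRing) (V:=R_NormedModule) f x).
    exists 0. apply Hd. eapply itv_between; [exact H1|exact H2|exact Hx].
  - lra.
Qed.

Lemma itv_nonempty a b : Rbar_lt a b -> exists s, open_itv a b s.
Proof.
  destruct a as [a| |], b as [b| |]; simpl; intros H; try tauto.
  - exists ((a+b)/2). split; simpl; lra.
  - exists (a+1). split; simpl; auto; lra.
  - exists (b-1). split; simpl; auto; lra.
  - exists 0. split; simpl; auto.
Qed.
Lemma vec_ext u v : vx u = vx v -> vy u = vy v -> vz u = vz v -> u = v.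
Proof. destruct u, v; simpl; intros; subst; reflexivity. Qed.

Lemma dot_comm u v : dot u v = dot v u.
Proof. unfold dot; ring. Qed.
Lemma dot_add_r u v w : dot u (vadd v w) = dot u v + dot u w.
Proof. unfold dot, vadd; simpl; ring. Qed.
Lemma dot_scal_r u c v : dot u (vscal c v) = c * dot u v.
Proof. unfold dot, vscal; simpl; ring. Qed.
Lemma dot_add_l u v w : dot (vadd v w) u = dot v u + dot w u.
Proof. unfold dot, vadd; simpl; ring. Qed.
Lemma dot_scal_l u c v : dot (vscal c v) u = c * dot v u.
Proof. unfold dot, vscal; simpl; ring. Qed.

Lemma cross_id1 n x d : (dot (cross n x) d)^2 =
  dot d d * dot n n * dot x x + 2 * dot d n * dot n x * dot x d
  - dot d d * (dot n x)^2 - dot n n * (dot d x)^2 - dot x x * (dot d n)^2.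
Proof. destruct n, x, d; unfold dot, cross; simpl; ring. Qed.
Lemma cross_id2 n x : dot (cross n x) (cross n x) = dot n n * dot x x - (dot n x)^2.
Proof. destruct n, x; unfold dot, cross; simpl; ring. Qed.
Lemma cross_id3 n x : dot (cross n x) x = 0.
Proof. destruct n, x; unfold dot, cross; simpl; ring. Qed.
Lemma cross_id4 n x : dot (cross n x) n = 0.
Proof. destruct n, x; unfold dot, cross; simpl; ring. Qed.

Lemma parseval xi nu d : dot xi xi = 1 -> dot nu nu = 1 -> dot xi nu = 0 ->
  dot d d = (dot xi d)^2 + (dot (cross nu xi) d)^2 + (dot nu d)^2.
Proof.
  intros H1 H2 H3. rewrite cross_id1, H1, H2, (dot_comm nu xi), H3.
  rewrite (dot_comm d xi), (dot_comm d nu). ring.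
Qed.

Lemma helix_from_D a b (xi D : R -> vec) c : Rbar_lt a b ->
  (forall s, open_itv a b s -> vderive D s (mkV 0 0 0)) ->
  (forall s, open_itv a b s -> dot (xi s) (D s) = c /\ dot (D s) (D s) = 1 + c^2) ->
  xi_helix (open_itv a b) xi.
Proof.
  intros Hab HD Hc. destruct (itv_nonempty a b Hab) as [s0 Hs0].
  assert (Hconst : forall s, open_itv a b s -> D s = D s0).
  { intros s Hs. apply vec_ext;
    apply (const_of_deriv0 a b (fun t => _ (D t))); auto; intros t Ht; apply HD; auto. }
  assert (HL : 0 < 1 + c^2) by nra.
  set (L := sqrt (1 + c^2)).
  assert (HL0 : 0 < L) by (apply sqrt_lt_R0; auto).
  assert (HL2 : L * L = 1 + c^2) by (apply sqrt_sqrt; lra).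
  exists (vscal (/ L) (D s0)), (acos (c / L)). split.
  - rewrite dot_scal_l, dot_scal_r. destruct (Hc s0 Hs0) as [_ ->].
    rewrite <- HL2. field. lra.
  - intros s Hs. rewrite cos_acos.
    + rewrite dot_scal_r, <- (Hconst s Hs). destruct (Hc s Hs) as [-> _]. field. lra.
    + assert (c * c < L * L) by nra.
      split.
      * apply (Rmult_le_reg_r L); [lra|]. unfold Rdiv. rewrite Rmult_assoc, Rinv_l by lra. nra.
      * apply (Rmult_le_reg_r L); [lra|]. unfold Rdiv. rewrite Rmult_assoc, Rinv_l by lra. nra.
Qed.
Lemma lancret_fwd a b (A M N G T : R -> R) c0 :
  Rbar_lt a b ->
  (forall s, open_itv a b s -> is_derive A s (G s * M s)) ->
  (forall s, open_itv a b s -> is_derive M s (- G s * A s + T s * N s)) ->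
  (forall s, open_itv a b s -> is_derive N s (- T s * M s)) ->
  (forall s, open_itv a b s -> A s ^2 + M s ^2 + N s ^2 = 1) ->
  (forall s, open_itv a b s -> G s <> 0) ->
  (forall s, open_itv a b s -> A s = c0) ->
  const_on (open_itv a b) (fun s => T s / G s).
Proof.
  intros Hab DA DM DN Hsq HG HA.
  destruct (itv_nonempty a b Hab) as [s0 Hs0].
  assert (HM0 : forall s, open_itv a b s -> M s = 0).
  { intros s Hs. assert (E := deriv_of_const a b A c0 s _ HA Hs (DA s Hs)).
    destruct (Rmult_integral _ _ E) as [E1|E1]; [destruct (HG s Hs E1)|exact E1]. }
  assert (HM' : forall s, open_itv a b s -> - G s * A s + T s * N s = 0).
  { intros s Hs. exact (deriv_of_const a b M 0 s _ HM0 Hs (DM s Hs)). }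
  assert (HN : forall s, open_itv a b s -> N s = N s0).
  { intros s Hs. apply (const_of_deriv0 a b N s0 s); auto.
    intros t Ht. replace 0 with (- T t * M t) by (rewrite HM0 by auto; ring). auto. }
  assert (H0 := Hsq s0 Hs0). rewrite HA, HM0 in H0 by auto.
  assert (H1 := HM' s0 Hs0). rewrite HA in H1 by auto.
  assert (HG0 := HG s0 Hs0).
  assert (HN0 : N s0 <> 0).
  { intros E. rewrite E in H0, H1. assert (c0 = 0).
    { apply (Rmult_eq_reg_l (G s0)); [|auto]. lra. }
    subst. lra. }
  exists (c0 / N s0). intros s Hs.
  assert (H2 := HM' s Hs). rewrite HA, HN in H2 by auto.
  assert (HGs := HG s Hs).
  field_simplify_eq; [lra | split; auto].
Qed.
Lemma Dinvsqrt (f : R -> R) s l : is_derive f s l -> 0 < f s ->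
  is_derive (fun t => / sqrt (f t)) s (- l / 2 * / sqrt (f s) / f s).
Proof.
  intros Hf Hp.
  assert (Hs := is_derive_sqrt f s l Hf Hp).
  assert (Hq : 0 < sqrt (f s)) by (apply sqrt_lt_R0; auto).
  assert (Hi := is_derive_inv _ _ _ Hs ltac:(lra)).
  replace (- l / 2 * / sqrt (f s) / f s) with (- (l / (2 * sqrt (f s))) / sqrt (f s) ^ 2).
  - exact Hi.
  - rewrite pow2_sqrt by lra. field. split; lra.
Qed.

Lemma Dsq (G : R -> R) s g : is_derive G s g -> is_derive (fun t => G t ^ 2) s (2 * G s * g).
Proof.
  intros H. replace (2 * G s * g) with (INR 2 * g * G s ^ Init.Nat.pred 2) by (simpl; ring).
  apply (is_derive_pow G 2 s g H).
Qed.

Lemma Rpower32 x : 0 < x -> Rpower x (3/2) = x * sqrt x.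
Proof.
  intros Hx. replace (3/2) with (1 + /2) by field.
  rewrite Rpower_plus, Rpower_1, Rpower_sqrt by auto. reflexivity.
Qed.

Lemma lancret3_fwd a b (A M N G K Gd Kd : R -> R) c0 :
  Rbar_lt a b ->
  (forall s, open_itv a b s -> is_derive A s (G s * M s + K s * N s)) ->
  (forall s, open_itv a b s -> is_derive M s (- G s * A s)) ->
  (forall s, open_itv a b s -> is_derive N s (- K s * A s)) ->
  (forall s, open_itv a b s -> is_derive G s (Gd s)) ->
  (forall s, open_itv a b s -> is_derive K s (Kd s)) ->
  (forall s, open_itv a b s -> A s ^2 + M s ^2 + N s ^2 = 1) ->
  (forall s, open_itv a b s -> 0 < G s ^ 2 + K s ^ 2) ->
  (forall s, open_itv a b s -> A s = c0) ->
  const_on (open_itv a b) (fun s => - (Gd s * K s - G s * Kd s)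
                  / Rpower (G s ^ 2 + K s ^ 2) (3 / 2)).
Proof.
  intros Hab DA DM DN DG DK Hsq HS HA.
  destruct (itv_nonempty a b Hab) as [s0 Hs0].
  assert (H1 : forall s, open_itv a b s -> G s * M s + K s * N s = 0).
  { intros s Hs. exact (deriv_of_const a b A c0 s _ HA Hs (DA s Hs)). }
  assert (H2 : forall s, open_itv a b s -> Gd s * M s + Kd s * N s = (G s ^ 2 + K s ^ 2) * c0).
  { intros s Hs.
    assert (E := deriv_of_const a b (fun t => G t * M t + K t * N t) 0 s _ H1 Hs
      (Dplus _ _ _ _ _ (Dmult _ _ _ _ _ (DG s Hs) (DM s Hs)) (Dmult _ _ _ _ _ (DK s Hs) (DN s Hs)))).
    rewrite (HA s Hs) in E. lra. }
  set (beta := fun t => (- K t * M t + G t * N t) * / sqrt (G t ^ 2 + K t ^ 2)).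
  assert (Hb : forall s, open_itv a b s -> beta s = beta s0).
  { intros s Hs. apply (const_of_deriv0 a b beta s0 s); auto.
    intros t Ht. unfold beta.
    assert (HSt := HS t Ht).
    assert (Hq := Dinvsqrt _ t _ (Dplus _ _ _ _ _ (Dsq _ _ _ (DG t Ht)) (Dsq _ _ _ (DK t Ht))) HSt).
    assert (Hn := Dmult _ _ _ _ _ (Dplus _ _ _ _ _ (Dmult _ _ _ _ _ (Dopp _ _ _ (DK t Ht)) (DM t Ht))
                                     (Dmult _ _ _ _ _ (DG t Ht) (DN t Ht))) Hq).
    assert (Hqp : 0 < sqrt (G t ^ 2 + K t ^ 2)) by (apply sqrt_lt_R0; auto).
    match type of Hn with is_derive _ _ ?l => replace 0 with l; [exact Hn|] end.
    transitivity (/ sqrt (G t ^ 2 + K t ^ 2) / (G t ^ 2 + K t ^ 2) *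
                  ((G t * M t + K t * N t) * (K t * Gd t - G t * Kd t))).
    - field. split; lra.
    - rewrite (H1 t Ht). ring. }
  assert (Hbsq : forall s, open_itv a b s -> beta s ^ 2 = 1 - c0 ^ 2).
  { intros s Hs. unfold beta. assert (HSs := HS s Hs).
    rewrite Rpow_mult_distr, pow_inv, pow2_sqrt by lra.
    assert (E := Hsq s Hs). rewrite (HA s Hs) in E.
    assert (E2 : (- K s * M s + G s * N s) ^ 2 = (G s ^ 2 + K s ^ 2) * (M s ^ 2 + N s ^ 2)).
    { transitivity ((G s ^ 2 + K s ^ 2) * (M s ^ 2 + N s ^ 2) - (G s * M s + K s * N s)^2); [ring|].
      rewrite (H1 s Hs). ring. }
    rewrite E2. field_simplify; lra. }
  assert (Hsig : forall s, open_itv a b s ->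
     (- (Gd s * K s - G s * Kd s) / Rpower (G s ^ 2 + K s ^ 2) (3 / 2)) * beta s = c0).
  { intros s Hs. assert (HSs := HS s Hs). rewrite Rpower32 by auto. unfold beta.
    assert (Hqp : 0 < sqrt (G s ^ 2 + K s ^ 2)) by (apply sqrt_lt_R0; auto).
    assert (E : (G s * Kd s - Gd s * K s) * (- K s * M s + G s * N s) = (G s ^ 2 + K s ^ 2) ^ 2 * c0).
    { transitivity ((G s ^ 2 + K s ^ 2) * (Gd s * M s + Kd s * N s)
          - (G s * Gd s + K s * Kd s) * (G s * M s + K s * N s)); [ring|].
      rewrite (H1 s Hs), (H2 s Hs). ring. }
    set (q := sqrt (G s ^ 2 + K s ^ 2)) in *.
    assert (Hq2 : q * q = G s ^ 2 + K s ^ 2) by (apply sqrt_sqrt; lra).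
    transitivity ((G s * Kd s - Gd s * K s) * (- K s * M s + G s * N s) / ((G s ^ 2 + K s ^ 2) * (q * q))).
    - field. split; lra.
    - rewrite E, Hq2. field. lra. }
  assert (HB : beta s0 <> 0).
  { intros E. assert (E1 := Hbsq s0 Hs0). assert (E2 := Hsig s0 Hs0).
    rewrite E in E1, E2. rewrite Rmult_0_r in E2. subst c0. lra. }
  exists (c0 / beta s0). intros s Hs.
  rewrite <- (Hsig s Hs), (Hb s Hs). field. split; [unfold Rpower; apply Rgt_not_eq, exp_pos | exact HB].
Qed.
Lemma fwd_setup a b r xi mu nu G K T d :
  myller_config (open_itv a b) r xi mu nu G K T -> dot d d = 1 -> forall s, open_itv a b s ->
  is_derive (fun t => dot (xi t) d) s (G s * dot (mu s) d + K s * dot (nu s) d) /\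
  is_derive (fun t => dot (mu t) d) s (- G s * dot (xi s) d + T s * dot (nu s) d) /\
  is_derive (fun t => dot (nu t) d) s (- K s * dot (xi s) d - T s * dot (mu s) d) /\
  (dot (xi s) d)^2 + (dot (mu s) d)^2 + (dot (nu s) d)^2 = 1.
Proof.
  intros Hmc Hd s Hs. destruct Hmc as [_ [_ [_ [_ [_ [_ Hf]]]]]].
  destruct (Hf s Hs) as [_ [Hxx [Hnn [Hxn [Hmu [Dxi [Dmu Dnu]]]]]]].
  split; [|split; [|split]].
  - assert (H := dot_derive _ _ _ d Dxi).
    rewrite dot_add_l, !dot_scal_l in H. exact H.
  - assert (H := dot_derive _ _ _ d Dmu).
    rewrite dot_add_l, !dot_scal_l in H. exact H.
  - assert (H := dot_derive _ _ _ d Dnu).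
    rewrite dot_add_l, !dot_scal_l in H.
    replace (- K s * dot (xi s) d - T s * dot (mu s) d) with
      (- K s * dot (xi s) d + - T s * dot (mu s) d) by ring. exact H.
  - rewrite Hmu. rewrite <- Hd. symmetry. apply parseval; auto.
Qed.

Lemma frame_facts xi mu nu : dot xi xi = 1 -> dot nu nu = 1 -> dot xi nu = 0 -> mu = cross nu xi ->
  dot nu xi = 0 /\ dot mu mu = 1 /\ dot mu xi = 0 /\ dot xi mu = 0 /\ dot mu nu = 0 /\ dot nu mu = 0.
Proof.
  intros H1 H2 H3 ->.
  assert (dot nu xi = 0) by (rewrite dot_comm; auto).
  rewrite cross_id2, H1, H2, H.
  assert (dot (cross nu xi) xi = 0) by apply cross_id3.
  assert (dot (cross nu xi) nu = 0) by apply cross_id4.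
  repeat split; auto; try ring; rewrite dot_comm; auto.
Qed.

Lemma nz_sq (G K : R) : G <> 0 \/ K <> 0 -> 0 < G ^ 2 + K ^ 2.
Proof.
  intros [h|h]; [assert (0 < Rsqr G) by (apply Rsqr_pos_lt; auto)
                |assert (0 < Rsqr K) by (apply Rsqr_pos_lt; auto)];
  unfold Rsqr in *; nra.
Qed.
Lemma nz_or_l (x y : R) : x <> 0 \/ y <> 0 -> y = 0 -> x <> 0.
Proof. intros [h|h] e; try exact h; contradiction. Qed.
Lemma nz_or_r (x y : R) : x <> 0 \/ y <> 0 -> x = 0 -> y <> 0.
Proof. intros [h|h] e; try exact h; contradiction. Qed.

Ltac dotsimp := repeat rewrite ?dot_add_l, ?dot_add_r, ?dot_scal_l, ?dot_scal_r.

Theorem corollary8 (a b : Rbar) (r xi mu nu : R -> vec) (G K T : R -> R) :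
  Rbar_lt a b ->
  myller_config (open_itv a b) r xi mu nu G K T ->
  (forall s, open_itv a b s -> G s <> 0 \/ K s <> 0) ->
  ((forall s, open_itv a b s -> K s = 0) ->
     (xi_helix (open_itv a b) xi <-> const_on (open_itv a b) (fun s => T s / G s))) /\
  ((forall s, open_itv a b s -> G s = 0) ->
     (xi_helix (open_itv a b) xi <-> const_on (open_itv a b) (fun s => T s / K s))) /\
  ((forall s, open_itv a b s -> T s = 0) ->
     (xi_helix (open_itv a b) xi <->
      const_on (open_itv a b)
        (fun s => - (Derive G s * K s - G s * Derive K s)
                  / Rpower (G s ^ 2 + K s ^ 2) (3 / 2)))).
Proof.
  intros Hab Hmc Hnz.
  pose proof Hmc as Hmc'.
  destruct Hmc' as [_ [_ [_ [HGs [HKs [HTs Hf]]]]]].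
  assert (DG : forall s, open_itv a b s -> is_derive G s (Derive G s)).
  { intros s Hs. apply Derive_correct. exact (HGs 1%nat s Hs). }
  assert (DK : forall s, open_itv a b s -> is_derive K s (Derive K s)).
  { intros s Hs. apply Derive_correct. exact (HKs 1%nat s Hs). }
  split; [|split].
  -
    intros HK0. split.
    + intros [d [th [Hd Hc]]].
      pose proof (fwd_setup _ _ _ _ _ _ _ _ _ d Hmc Hd) as FS.
      apply (lancret_fwd a b (fun t => dot (xi t) d) (fun t => dot (mu t) d)
               (fun t => dot (nu t) d) G T (cos th) Hab).
      * intros s Hs. destruct (FS s Hs) as [D1 _]. rewrite (HK0 s Hs) in D1.
        replace (G s * dot (mu s) d) with (G s * dot (mu s) d + 0 * dot (nu s) d) by ring. exact D1.
      * intros s Hs. apply (FS s Hs).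
      * intros s Hs. destruct (FS s Hs) as [_ [_ [D3 _]]]. rewrite (HK0 s Hs) in D3.
        replace (- T s * dot (mu s) d) with (- 0 * dot (xi s) d - T s * dot (mu s) d) by ring. exact D3.
      * intros s Hs. apply (FS s Hs).
      * intros s Hs. apply (nz_or_l _ _ (Hnz s Hs) (HK0 s Hs)).
      * exact Hc.
    + intros [c Hc].
      apply (helix_from_D a b xi (fun t => vadd (vscal c (xi t)) (nu t)) c Hab).
      * intros s Hs. destruct (Hf s Hs) as [_ [Hxx [Hnn [Hxn [Hmu [Dxi [Dmu Dnu]]]]]]].
        assert (HGn : G s <> 0) by (apply (nz_or_l _ _ (Hnz s Hs) (HK0 s Hs))).
        assert (HT : T s = c * G s) by (rewrite <- (Hc s Hs); field; auto).
        assert (E := vderive_lin _ _ _ _ _ c Dxi Dnu).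
        match type of E with vderive _ _ ?w => replace (mkV 0 0 0) with w; [exact E|] end.
        apply vec_ext; cbn [vx vy vz vadd vscal]; rewrite HT, (HK0 s Hs); ring.
      * intros s Hs. destruct (Hf s Hs) as [_ [Hxx [Hnn [Hxn [Hmu _]]]]].
        destruct (frame_facts _ _ _ Hxx Hnn Hxn Hmu) as [Hnx _].
        dotsimp. rewrite Hxx, Hnn, Hxn, Hnx. split; ring.
  -
    intros HG0. split.
    + intros [d [th [Hd Hc]]].
      pose proof (fwd_setup _ _ _ _ _ _ _ _ _ d Hmc Hd) as FS.
      apply (lancret_fwd a b (fun t => dot (xi t) d) (fun t => dot (nu t) d)
               (fun t => - dot (mu t) d) K T (cos th) Hab).
      * intros s Hs. destruct (FS s Hs) as [D1 _]. rewrite (HG0 s Hs) in D1.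
        replace (K s * dot (nu s) d) with (0 * dot (mu s) d + K s * dot (nu s) d) by ring. exact D1.
      * intros s Hs. destruct (FS s Hs) as [_ [_ [D3 _]]].
        replace (- K s * dot (xi s) d + T s * - dot (mu s) d) with
          (- K s * dot (xi s) d - T s * dot (mu s) d) by ring. exact D3.
      * intros s Hs. destruct (FS s Hs) as [_ [D2 _]]. rewrite (HG0 s Hs) in D2.
        replace (- T s * dot (nu s) d) with (- (- 0 * dot (xi s) d + T s * dot (nu s) d)) by ring.
        apply Dopp. exact D2.
      * intros s Hs. destruct (FS s Hs) as [_ [_ [_ Q]]]. rewrite <- Q. ring.
      * intros s Hs. apply (nz_or_r _ _ (Hnz s Hs) (HG0 s Hs)).
      * exact Hc.
    + intros [c Hc].
      apply (helix_from_D a b xi (fun t => vadd (vscal c (xi t)) (vscal (-1) (mu t))) c Hab).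
      * intros s Hs. destruct (Hf s Hs) as [_ [Hxx [Hnn [Hxn [Hmu [Dxi [Dmu Dnu]]]]]]].
        assert (HKn : K s <> 0) by (apply (nz_or_r _ _ (Hnz s Hs) (HG0 s Hs))).
        assert (HT : T s = c * K s) by (rewrite <- (Hc s Hs); field; auto).
        assert (E := vderive_lin _ _ _ _ _ c Dxi
                       (vderive_scal (fun _ => -1) mu s 0 _ (Dconst (-1) s) Dmu)).
        match type of E with vderive _ _ ?w => replace (mkV 0 0 0) with w; [exact E|] end.
        apply vec_ext; cbn [vx vy vz vadd vscal]; rewrite HT, (HG0 s Hs); ring.
      * intros s Hs. destruct (Hf s Hs) as [_ [Hxx [Hnn [Hxn [Hmu _]]]]].
        destruct (frame_facts _ _ _ Hxx Hnn Hxn Hmu) as [Hnx [Hmm [Hmx [Hxm _]]]].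
        dotsimp. rewrite Hxx, Hmm, Hxm, Hmx. split; ring.
  -
    intros HT0. split.
    + intros [d [th [Hd Hc]]].
      pose proof (fwd_setup _ _ _ _ _ _ _ _ _ d Hmc Hd) as FS.
      apply (lancret3_fwd a b (fun t => dot (xi t) d) (fun t => dot (mu t) d)
               (fun t => dot (nu t) d) G K (Derive G) (Derive K) (cos th) Hab).
      * intros s Hs. apply (FS s Hs).
      * intros s Hs. destruct (FS s Hs) as [_ [D2 _]]. rewrite (HT0 s Hs) in D2.
        replace (- G s * dot (xi s) d) with (- G s * dot (xi s) d + 0 * dot (nu s) d) by ring. exact D2.
      * intros s Hs. destruct (FS s Hs) as [_ [_ [D3 _]]]. rewrite (HT0 s Hs) in D3.
        replace (- K s * dot (xi s) d) with (- K s * dot (xi s) d - 0 * dot (mu s) d) by ring. exact D3.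
      * exact DG.
      * exact DK.
      * intros s Hs. apply (FS s Hs).
      * intros s Hs. apply nz_sq, Hnz, Hs.
      * exact Hc.
    + intros [c Hc].
      apply (helix_from_D a b xi (fun t => vadd (vscal c (xi t))
               (vscal (/ sqrt (G t ^ 2 + K t ^ 2)) (vadd (vscal (- K t) (mu t)) (vscal (G t) (nu t))))) c Hab).
      * intros s Hs. destruct (Hf s Hs) as [_ [Hxx [Hnn [Hxn [Hmu [Dxi [Dmu Dnu]]]]]]].
        assert (HS := nz_sq _ _ (Hnz s Hs)).
        assert (Hq := Dinvsqrt _ s _ (Dplus _ _ _ _ _ (Dsq _ _ _ (DG s Hs)) (Dsq _ _ _ (DK s Hs))) HS).
        assert (EV := vderive_add _ _ _ _ _
                   (vderive_scal (fun t => - K t) mu s _ _ (Dopp _ _ _ (DK s Hs)) Dmu)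
                   (vderive_scal G nu s _ _ (DG s Hs) Dnu)).
        assert (E := vderive_lin _ _ _ _ _ c Dxi (vderive_scal _ _ s _ _ Hq EV)).
        match type of E with vderive _ _ ?w => replace (mkV 0 0 0) with w; [exact E|] end.
        assert (Hqp : 0 < sqrt (G s ^ 2 + K s ^ 2)) by (apply sqrt_lt_R0; auto).
        rewrite <- (Hc s Hs). rewrite Rpower32 by auto. rewrite (HT0 s Hs).
        apply vec_ext; cbn [vx vy vz vadd vscal]; field; split; lra.
      * intros s Hs. destruct (Hf s Hs) as [_ [Hxx [Hnn [Hxn [Hmu _]]]]].
        destruct (frame_facts _ _ _ Hxx Hnn Hxn Hmu) as [Hnx [Hmm [Hmx [Hxm [Hmn Hnm]]]]].
        assert (HS := nz_sq _ _ (Hnz s Hs)).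
        assert (Hq2 : sqrt (G s ^ 2 + K s ^ 2) * sqrt (G s ^ 2 + K s ^ 2) = G s ^ 2 + K s ^ 2)
          by (apply sqrt_sqrt; lra).
        assert (Hqp : 0 < sqrt (G s ^ 2 + K s ^ 2)) by (apply sqrt_lt_R0; auto).
        dotsimp. rewrite Hxx, Hnn, Hxn, Hnx, Hmm, Hmx, Hxm, Hmn, Hnm. split; [ring|].
        set (q := sqrt (G s ^ 2 + K s ^ 2)) in *.
        transitivity (c ^ 2 + (G s ^ 2 + K s ^ 2) / (q * q)); [field; lra|].
        rewrite Hq2. field. lra.
Qed.
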